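(* Let $\Omega = \{-1\} \cup [0,\infty)$, let $E$ be the Banach space of all bounded continuous real functions on $\Omega$ with the supremum norm, and let $$C = \{ x \in E : 0 \le x(u) \le 1 \text{ for all } u \in \Omega,\ |x(u_1)-x(u_2)| \le |u_1-u_2| \text{ for all } u_1,u_2 \in [0,\infty)\}.$$ For $x \in C$ and $v \ge 0$ put $\alpha_x(v) = \sup\{ x(s) : s \in \{-1\}\cup[v,\infty)\}$. For $t \in [0,1]$ and $x \in C$ define $T(t)x$ on $\Omega$ by $$(T(t)x)(u) = \begin{cases} x(-1), & u=-1,\\ x(u-t), & u \ge t,\\ x(0)-t+u, & 0\le u\le t \text{ and } 1-\alpha_x(1-t+u) \le x(0)-t+u,\\ x(0)+t-u, & 0\le u\le t \text{ and } 1-\alpha_x(1-t+u) \ge x(0)+t-u,\\ 1-\alpha_x(1-t+u), & 0 \le u \le t \text{ and } |1-\alpha_x(1-t+u)-x(0)| \le t-u. \end{cases}$$ For $t > 1$, write $t = m/2 + t'$ with $m \in \mathbb N$ and $t' \in [0,1/2)$, and define $T(t) = T(1/2)^m \circ T(t')$. Then $C$ is a closed convex subset of $E$, $\{T(t): t\ge 0\}$ is a one-parameter nonexpansive semigroup on $C$, the zero function $0 \in C$ is not a common fixed point of $\{T(t) : t \ge 0\}$, and $$\lim_{t\to\infty} \left\| \frac{1}{t}\int_0^t T(s)0\, ds - 0 \right\| = 0.$$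
   Context: A family $\{T(t): t\ge 0\}$ of mappings on a subset $C$ of a Banach space is a one-parameter nonexpansive semigroup on $C$ if: each $T(t)$ is nonexpansive on $C$ ($\|T(t)x-T(t)y\|\le\|x-y\|$ for all $x,y\in C$); $T(0)x=x$ for all $x\in C$; $T(s+t)=T(s)\circ T(t)$ for all $s,t\ge 0$; and for each $x\in C$ the map $t\mapsto T(t)x$ is continuous. A common fixed point is a point $z\in C$ with $T(t)z=z$ for all $t\ge 0$. $\mathbb N$ denotes the set of positive integers. *)

(* Defs.v *)
From Stdlib Require Import Reals Lra Lia ZArith.
From Coquelicot Require Import Coquelicot.
Open Scope R_scope.

(* Elements of E are represented as functions R -> R; only their values on
   Omega = {-1} u [0, oo) matter. Equality in E is equality on Omega. *)
Definition Omega (u : R) : Prop := u = -1 \/ 0 <= u.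

Definition eqOn (x y : R -> R) : Prop := forall u, Omega u -> x u = y u.

Definition inE (x : R -> R) : Prop :=
  (exists M, forall u, Omega u -> Rabs (x u) <= M) /\
  (forall u, Omega u -> forall eps, 0 < eps -> exists delta, 0 < delta /\
     forall v, Omega v -> Rabs (v - u) < delta -> Rabs (x v - x u) < eps).

Definition supn (x : R -> R) : R :=
  real (Lub_Rbar (fun r => exists u, Omega u /\ r = Rabs (x u))).

Definition dist (x y : R -> R) : R := supn (fun u => x u - y u).

Definition inC (x : R -> R) : Prop :=
  inE x /\
  (forall u, Omega u -> 0 <= x u <= 1) /\
  (forall u1 u2, 0 <= u1 -> 0 <= u2 -> Rabs (x u1 - x u2) <= Rabs (u1 - u2)).

Definition zeroE : R -> R := fun _ => 0.

Definition alpha (x : R -> R) (v : R) : R :=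
  real (Lub_Rbar (fun r => exists s, (s = -1 \/ v <= s) /\ r = x s)).

(* T(t) for t in [0,1]; the three cases for 0 <= u <= t amount to clamping
   1 - alpha_x(1-t+u) into [x(0)-t+u, x(0)+t-u] (they agree on overlaps). *)
Definition T01 (t : R) (x : R -> R) : R -> R := fun u =>
  if Req_EM_T u (-1) then x (-1)
  else if Rle_dec t u then x (u - t)
  else
    let a := 1 - alpha x (1 - t + u) in
    if Rle_dec a (x 0 - t + u) then x 0 - t + u
    else if Rle_dec (x 0 + t - u) a then x 0 + t - u
    else a.

(* For t > 1: t = m/2 + t' with m = floor(2t), t' in [0,1/2);
   T(t) = T(1/2)^m o T(t'). *)
Definition mT (t : R) : nat := Z.to_nat (Int_part (2 * t)).

Definition T (t : R) (x : R -> R) : R -> R :=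
  if Rle_dec t 1 then T01 t x
  else Nat.iter (mT t) (T01 (1/2)) (T01 (t - INR (mT t) / 2) x).

Definition closed_in_E (P : (R -> R) -> Prop) : Prop :=
  forall (xs : nat -> R -> R) (x : R -> R),
    (forall n, P (xs n)) -> inE x ->
    is_lim_seq (fun n => dist (xs n) x) 0 -> P x.

Definition convex_set (P : (R -> R) -> Prop) : Prop :=
  forall x y lam, P x -> P y -> 0 <= lam <= 1 ->
    P (fun u => lam * x u + (1 - lam) * y u).

Definition nonexpansive_semigroup (P : (R -> R) -> Prop)
    (S : R -> (R -> R) -> (R -> R)) : Prop :=
  (forall t x, 0 <= t -> P x -> P (S t x)) /\
  (forall t x y, 0 <= t -> P x -> P y -> dist (S t x) (S t y) <= dist x y) /\
  (forall x, P x -> eqOn (S 0 x) x) /\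
  (forall s t x, 0 <= s -> 0 <= t -> P x -> eqOn (S (s + t) x) (S s (S t x))) /\
  (forall x, P x -> forall t0, 0 <= t0 -> forall eps, 0 < eps ->
     exists delta, 0 < delta /\ forall t, 0 <= t -> Rabs (t - t0) < delta ->
       dist (S t x) (S t0 x) < eps).

Definition common_fixed_point (P : (R -> R) -> Prop)
    (S : R -> (R -> R) -> (R -> R)) (z : R -> R) : Prop :=
  P z /\ forall t, 0 <= t -> eqOn (S t z) z.

(* E-valued Riemann integral: I is the Riemann integral over [a,b] of
   f : R -> E, i.e. the limit in E (sup norm on Omega) of tagged Riemann sums
   as the mesh tends to 0. A tagged partition with k+1 intervals is given by
   p 0 = a <= p 1 <= ... <= p (S k) = b and tags p i <= xi i <= p (S i). *)
Definition riemann_sum (f : R -> R -> R) (k : nat) (p xi : nat -> R) : R -> R :=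
  fun u => sum_n (fun i => f (xi i) u * (p (S i) - p i)) k.

Definition is_E_integral (f : R -> R -> R) (a b : R) (I : R -> R) : Prop :=
  inE I /\
  forall eps, 0 < eps -> exists delta, 0 < delta /\
    forall (k : nat) (p xi : nat -> R),
      p 0%nat = a -> p (S k) = b ->
      (forall i, (i <= k)%nat -> p i <= xi i <= p (S i)) ->
      (forall i, (i <= k)%nat -> p (S i) - p i < delta) ->
      dist I (riemann_sum f k p xi) <= eps.

(* Main.v *)
Require Import Defs.
From Stdlib Require Import Reals Lra Lia ZArith.
From Coquelicot Require Import Coquelicot.
Import Defs.
Open Scope R_scope.

Ltac mm := unfold Rmax, Rmin in *; repeat (destruct Rle_dec); try lra.

Lemma lub_bounds (E : R -> Prop) M :
  (forall r, E r -> r <= M) -> (exists r0, E r0) ->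
  (forall r, E r -> r <= real (Lub_Rbar E)) /\ real (Lub_Rbar E) <= M.
Proof.
  intros HM [r0 Hr0]. destruct (Lub_Rbar_correct E) as [ub lub].
  destruct (Lub_Rbar E) as [l| |] eqn:El; simpl.
  - split. intros r Hr. apply (ub r Hr). apply (lub (Finite M)). intros r Hr; apply HM; auto.
  - exfalso. specialize (lub (Finite M)). simpl in lub. apply lub. intros r Hr; apply HM; auto.
  - exfalso. specialize (ub r0 Hr0). simpl in ub. auto.
Qed.

Lemma lub_eq (E : R -> Prop) M :
  (forall r, E r -> r <= M) -> E M -> real (Lub_Rbar E) = M.
Proof.
  intros H1 H2. destruct (lub_bounds E M H1 (ex_intro _ M H2)) as [a b].
  specialize (a M H2). lra.
Qed.

Definition bnd (x : R -> R) := exists M, forall u, Omega u -> Rabs (x u) <= M.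

Lemma supn_ub x u : bnd x -> Omega u -> Rabs (x u) <= supn x.
Proof.
  intros [M HM] Hu. unfold supn.
  destruct (lub_bounds (fun r => exists u, Omega u /\ r = Rabs (x u)) M) as [a _].
  - intros r [v [Hv ->]]; auto.
  - exists (Rabs (x (-1))), (-1); split; [left; reflexivity|reflexivity].
  - apply a; eauto.
Qed.

Lemma supn_le x M : (forall u, Omega u -> Rabs (x u) <= M) -> supn x <= M.
Proof.
  intros HM. unfold supn.
  destruct (lub_bounds (fun r => exists u, Omega u /\ r = Rabs (x u)) M) as [_ b].
  - intros r [v [Hv ->]]; auto.
  - exists (Rabs (x (-1))), (-1); split; [left; reflexivity|reflexivity].
  - auto.
Qed.

Lemma supn_ext x y : eqOn x y -> supn x = supn y.
Proof.
  intros H. unfold supn. f_equal. apply Lub_Rbar_eqset. intros r; split;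
  intros [u [Hu ->]]; exists u; split; auto; rewrite H; auto.
Qed.

Lemma dist_sym x y : dist x y = dist y x.
Proof.
  unfold dist, supn. f_equal. apply Lub_Rbar_eqset. intros r; split;
  intros [u [Hu ->]]; exists u; split; auto; apply Rabs_minus_sym.
Qed.

Lemma dist_ext x x' y y' : eqOn x x' -> eqOn y y' -> dist x y = dist x' y'.
Proof.
  intros H1 H2. unfold dist. apply supn_ext. intros u Hu. rewrite H1, H2; auto.
Qed.

Lemma bnd_minus x y : bnd x -> bnd y -> bnd (fun u => x u - y u).
Proof.
  intros [M HM] [N HN]. exists (M + N). intros u Hu.
  eapply Rle_trans. apply Rabs_triang. rewrite Rabs_Ropp. specialize (HM u Hu); specialize (HN u Hu); lra.
Qed.

Lemma dist_ub x y u : bnd x -> bnd y -> Omega u -> Rabs (x u - y u) <= dist x y.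
Proof.
  intros. unfold dist. apply (supn_ub (fun u => x u - y u)); auto. apply bnd_minus; auto.
Qed.

Lemma dist_le x y M : (forall u, Omega u -> Rabs (x u - y u) <= M) -> dist x y <= M.
Proof. intros. unfold dist. apply supn_le. auto. Qed.

Definition Aset (x : R -> R) v := fun r => exists s, (s = -1 \/ v <= s) /\ r = x s.

Lemma alpha_ub x v M s : (forall s, (s = -1 \/ v <= s) -> x s <= M) ->
  (s = -1 \/ v <= s) -> x s <= alpha x v.
Proof.
  intros HM Hs. unfold alpha. destruct (lub_bounds (Aset x v) M) as [a _].
  - intros r [w [Hw ->]]; auto.
  - exists (x (-1)), (-1); split; [left; reflexivity|reflexivity].
  - apply a. exists s; auto.
Qed.

Lemma alpha_le x v M : (forall s, (s = -1 \/ v <= s) -> x s <= M) -> alpha x v <= M.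
Proof.
  intros HM. unfold alpha. destruct (lub_bounds (Aset x v) M) as [_ b].
  - intros r [w [Hw ->]]; auto.
  - exists (x (-1)), (-1); split; [left; reflexivity|reflexivity].
  - auto.
Qed.

Lemma alpha_eq x v M : (forall s, (s = -1 \/ v <= s) -> x s <= M) ->
  (exists s, (s = -1 \/ v <= s) /\ x s = M) -> alpha x v = M.
Proof.
  intros HM [s [Hs Hx]]. apply Rle_antisym. apply alpha_le; auto.
  rewrite <- Hx. eapply alpha_ub; eauto.
Qed.
Definition Lip (x : R -> R) := forall u1 u2, 0 <= u1 -> 0 <= u2 -> Rabs (x u1 - x u2) <= Rabs (u1 - u2).

Lemma Omega_cases u : Omega u -> u = -1 \/ 0 <= u.
Proof. auto. Qed.

Lemma inC_intro x : (forall u, Omega u -> 0 <= x u <= 1) -> Lip x -> inC x.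
Proof.
  intros H01 HL. split; [split|split; auto].
  - exists 1. intros u Hu. specialize (H01 u Hu). rewrite Rabs_pos_eq; lra.
  - intros u Hu eps Heps. destruct Hu as [Hu|Hu].
    + exists 1. split. lra. intros v [Hv|Hv] Hd.
      * subst. rewrite Rminus_diag, Rabs_R0; auto.
      * subst. rewrite Rabs_pos_eq in Hd; lra.
    + exists (Rmin eps 1). split. mm. intros v [Hv|Hv] Hd.
      * subst. rewrite Rabs_left in Hd; mm.
      * eapply Rle_lt_trans. apply HL; auto. mm.
Qed.

Lemma inC_bnd x : inC x -> bnd x.
Proof. intros [[H _] _]; exact H. Qed.
Lemma inC_01 x u : inC x -> Omega u -> 0 <= x u <= 1.
Proof. intros [_ [H _]]; auto. Qed.
Lemma inC_Lip x : inC x -> Lip x.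
Proof. intros [_ [_ H]]; exact H. Qed.

Definition clamp a l h := Rmax l (Rmin a h).

Lemma T01_m1 t x : T01 t x (-1) = x (-1).
Proof. unfold T01. destruct Req_EM_T; [reflexivity|congruence]. Qed.

Lemma T01_ge t x u : 0 <= u -> t <= u -> T01 t x u = x (u - t).
Proof.
  intros. unfold T01. destruct Req_EM_T. lra. destruct Rle_dec; [reflexivity|lra].
Qed.

Lemma T01_lt t x u : 0 <= u < t ->
  T01 t x u = clamp (1 - alpha x (1 - t + u)) (x 0 - t + u) (x 0 + t - u).
Proof.
  intros. unfold T01, clamp. destruct Req_EM_T. lra. destruct Rle_dec. lra.
  simpl. repeat destruct Rle_dec; mm.
Qed.

Lemma Lip_alpha x v1 v2 : inC x -> 0 <= v1 <= v2 ->
  alpha x v2 <= alpha x v1 <= alpha x v2 + (v2 - v1).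
Proof.
  intros Hx Hv. assert (B: forall s, (s = -1 \/ 0 <= s) -> x s <= 1).
  { intros s Hs. apply (inC_01 x s Hx Hs). }
  split.
  - apply alpha_le. intros s [Hs|Hs]. eapply alpha_ub with (M:=1). intros; apply B; intuition lra. auto.
    eapply alpha_ub with (M:=1). intros; apply B; intuition lra. right; lra.
  - apply alpha_le. intros s [Hs|Hs].
    + assert (x s <= alpha x v2). eapply alpha_ub with (M:=1). intros; apply B; intuition lra. auto. lra.
    + destruct (Rle_lt_dec v2 s).
      * assert (x s <= alpha x v2). eapply alpha_ub with (M:=1). intros; apply B; intuition lra. auto. lra.
      * assert (x v2 <= alpha x v2). eapply alpha_ub with (M:=1). intros; apply B; intuition lra. right; lra.
        pose proof (inC_Lip x Hx s v2 ltac:(lra) ltac:(lra)).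
        rewrite (Rabs_left (s - v2)) in H0 by lra. apply Rabs_le_between in H0. lra.
Qed.

Lemma alpha_01 x v : inC x -> 0 <= v -> 0 <= alpha x v <= 1.
Proof.
  intros Hx Hv. assert (B: forall s, (s = -1 \/ v <= s) -> x s <= 1).
  { intros s Hs. apply (inC_01 x s Hx). destruct Hs; [left|right]; lra. }
  split. eapply Rle_trans. apply (inC_01 x (-1) Hx). left; reflexivity.
  eapply alpha_ub; eauto. apply alpha_le; auto.
Qed.

Lemma alpha_ext x y v : 0 <= v -> eqOn x y -> alpha x v = alpha y v.
Proof.
  intros Hv H. unfold alpha. f_equal. apply Lub_Rbar_eqset. intros r; split;
  intros [s [Hs ->]]; exists s; (split; [exact Hs|]);
  [apply H|symmetry; apply H]; (destruct Hs; [left|right]; lra).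
Qed.

Lemma T01_ext t x y : 0 <= t <= 1 -> eqOn x y -> eqOn (T01 t x) (T01 t y).
Proof.
  intros Ht H u [Hu|Hu].
  - subst. rewrite !T01_m1. apply H. left; reflexivity.
  - destruct (Rle_lt_dec t u).
    + rewrite !T01_ge by lra. apply H. right; lra.
    + rewrite !T01_lt by lra. rewrite (alpha_ext x y (1 - t + u) ltac:(lra) H). rewrite H. reflexivity. right; lra.
Qed.

Lemma T01_C t x : 0 <= t <= 1 -> inC x -> inC (T01 t x).
Proof.
  intros Ht Hx. pose proof (inC_01 x 0 Hx ltac:(right; lra)) as H0.
  apply inC_intro.
  - intros u [Hu|Hu].
    + subst. rewrite T01_m1. apply inC_01; auto. left; reflexivity.
    + destruct (Rle_lt_dec t u).
      * rewrite T01_ge by lra. apply inC_01; auto. right; lra.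
      * rewrite T01_lt by lra. pose proof (alpha_01 x (1 - t + u) Hx ltac:(lra)).
        unfold clamp; mm.
  - intros u1 u2 H1 H2.
    assert (L: forall a b, 0 <= a < t -> t <= b ->
       Rabs (T01 t x a - T01 t x b) <= Rabs (a - b)).
    { intros a b Ha Hb. rewrite T01_lt, T01_ge by lra.
      pose proof (inC_Lip x Hx (b - t) 0 ltac:(lra) ltac:(lra)).
      rewrite Rminus_0_r, (Rabs_pos_eq (b - t)) in H by lra.
      apply Rabs_le_between in H.
      rewrite (Rabs_left (a - b)) by lra. apply Rabs_le. unfold clamp; mm. }
    destruct (Rle_lt_dec t u1), (Rle_lt_dec t u2).
    + rewrite !T01_ge by lra. replace (u1 - u2) with ((u1 - t) - (u2 - t)) by ring.
      apply inC_Lip; auto; lra.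
    + rewrite Rabs_minus_sym, (Rabs_minus_sym u1). apply L; lra.
    + apply L; lra.
    + rewrite !T01_lt by lra.
      destruct (Rle_lt_dec u1 u2).
      * pose proof (Lip_alpha x (1 - t + u1) (1 - t + u2) Hx ltac:(lra)).
        rewrite (Rabs_left1 (u1 - u2)) by lra. apply Rabs_le. unfold clamp; mm.
      * pose proof (Lip_alpha x (1 - t + u2) (1 - t + u1) Hx ltac:(lra)).
        rewrite (Rabs_pos_eq (u1 - u2)) by lra. apply Rabs_le. unfold clamp; mm.
Qed.

Lemma T01_0 x : eqOn (T01 0 x) x.
Proof.
  intros u [Hu|Hu]. subst; apply T01_m1. rewrite T01_ge by lra. f_equal; ring.
Qed.

Lemma T01_at0 t x : 0 <= t -> T01 t x 0 = clamp (1 - alpha x (1 - t)) (x 0 - t) (x 0 + t).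
Proof.
  intros Ht. destruct (Rle_lt_dec t 0).
  - assert (t = 0) by lra. subst. rewrite T01_ge by lra. unfold clamp; mm; rewrite Rminus_0_r; lra.
  - rewrite T01_lt by lra. replace (1 - t + 0) with (1 - t) by ring.
    replace (x 0 - t + 0) with (x 0 - t) by ring. replace (x 0 + t - 0) with (x 0 + t) by ring.
    reflexivity.
Qed.

Lemma alpha_T01 t x v : 0 <= t <= 1 -> t <= v -> alpha (T01 t x) v = alpha x (v - t).
Proof.
  intros Ht Hv. unfold alpha. f_equal. apply Lub_Rbar_eqset. intros r; split.
  - intros [s [[Hs|Hs] ->]].
    + subst. exists (-1). split. left; reflexivity. apply T01_m1.
    + exists (s - t). split. right; lra. apply T01_ge; lra.
  - intros [w [[Hw|Hw] ->]].
    + subst. exists (-1). split. left; reflexivity. symmetry; apply T01_m1.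
    + exists (w + t). split. right; lra. rewrite T01_ge by lra. f_equal; ring.
Qed.

Lemma alpha_nonexp x y v : inC x -> inC y -> 0 <= v ->
  Rabs (alpha x v - alpha y v) <= dist x y.
Proof.
  intros Hx Hy Hv.
  assert (K: forall x y, inC x -> inC y -> alpha x v <= alpha y v + dist x y).
  { clear x y Hx Hy. intros x y Hx Hy. apply alpha_le. intros s Hs.
    assert (Om: Omega s) by (destruct Hs; [left|right]; lra).
    pose proof (dist_ub x y s (inC_bnd x Hx) (inC_bnd y Hy) Om).
    apply Rabs_le_between in H.
    assert (y s <= alpha y v). { eapply alpha_ub with (M := 1); eauto. intros w Hw; apply (inC_01 y); auto.
    destruct Hw; [left|right]; lra. } lra. }
  pose proof (K x y Hx Hy). pose proof (K y x Hy Hx). rewrite dist_sym in H0.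
  apply Rabs_le; lra.
Qed.

Lemma T01_nonexp t x y : 0 <= t <= 1 -> inC x -> inC y ->
  dist (T01 t x) (T01 t y) <= dist x y.
Proof.
  intros Ht Hx Hy. apply dist_le. intros u [Hu|Hu].
  - subst. rewrite !T01_m1. apply dist_ub; try apply inC_bnd; auto. left; reflexivity.
  - destruct (Rle_lt_dec t u).
    + rewrite !T01_ge by lra. apply dist_ub; try apply inC_bnd; auto. right; lra.
    + rewrite !T01_lt by lra.
      pose proof (alpha_nonexp x y (1 - t + u) Hx Hy ltac:(lra)).
      pose proof (dist_ub x y 0 (inC_bnd x Hx) (inC_bnd y Hy) ltac:(right; lra)).
      apply Rabs_le_between in H, H0. apply Rabs_le. unfold clamp; mm.
Qed.

Lemma T01_close h x : 0 <= h <= 1 -> inC x -> dist (T01 h x) x <= h.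
Proof.
  intros Hh Hx. apply dist_le. intros u [Hu|Hu].
  - subst. rewrite T01_m1, Rminus_diag, Rabs_R0; lra.
  - destruct (Rle_lt_dec h u).
    + rewrite T01_ge by lra. eapply Rle_trans. apply inC_Lip; auto; lra.
      rewrite Rabs_left1; lra.
    + rewrite T01_lt by lra. pose proof (inC_Lip x Hx u 0 Hu ltac:(lra)).
      rewrite Rminus_0_r, (Rabs_pos_eq u) in H by lra. apply Rabs_le_between in H.
      apply Rabs_le. unfold clamp; mm.
Qed.

Lemma clamp_comp a a' x0 t r : 0 <= t -> 0 <= r -> a <= a' -> a' - a <= r ->
  clamp a (clamp a' (x0 - t) (x0 + t) - r) (clamp a' (x0 - t) (x0 + t) + r)
  = clamp a (x0 - t - r) (x0 + t + r).
Proof. intros. unfold clamp; mm. Qed.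

Lemma L1 s t x : 0 <= s -> 0 <= t -> s + t <= 1 -> inC x ->
  eqOn (T01 (s + t) x) (T01 s (T01 t x)).
Proof.
  intros Hs Ht Hst Hx u [Hu|Hu].
  - subst. rewrite !T01_m1. reflexivity.
  - destruct (Rle_lt_dec (s + t) u).
    + rewrite !T01_ge by lra. f_equal; ring.
    + destruct (Rle_lt_dec s u).
      * rewrite (T01_ge s) by lra. rewrite !T01_lt by lra.
        replace (1 - t + (u - s)) with (1 - (s + t) + u) by ring.
        replace (x 0 - t + (u - s)) with (x 0 - (s + t) + u) by ring.
        replace (x 0 + t - (u - s)) with (x 0 + (s + t) - u) by ring. reflexivity.
      * rewrite !T01_lt by lra. rewrite alpha_T01 by lra. rewrite T01_at0 by lra.
        pose proof (Lip_alpha x (1 - (s + t) + u) (1 - t) Hx ltac:(lra)).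
        replace (1 - s + u - t) with (1 - (s + t) + u) by ring.
        replace (clamp (1 - alpha x (1 - t)) (x 0 - t) (x 0 + t) - s + u) with
          (clamp (1 - alpha x (1 - t)) (x 0 - t) (x 0 + t) - (s - u)) by ring.
        replace (clamp (1 - alpha x (1 - t)) (x 0 - t) (x 0 + t) + s - u) with
          (clamp (1 - alpha x (1 - t)) (x 0 - t) (x 0 + t) + (s - u)) by ring.
        rewrite clamp_comp by lra. f_equal; ring.
Qed.

Lemma eqOn_refl x : eqOn x x. Proof. intros u _; reflexivity. Qed.
Lemma eqOn_sym x y : eqOn x y -> eqOn y x. Proof. intros H u Hu; symmetry; auto. Qed.
Lemma eqOn_trans x y z : eqOn x y -> eqOn y z -> eqOn x z.
Proof. intros H1 H2 u Hu; rewrite H1; auto. Qed.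

Definition Th := T01 (1/2).
Definition Sg n r x := Nat.iter n Th (T01 r x).

Lemma iter_ext n x y : eqOn x y -> eqOn (Nat.iter n Th x) (Nat.iter n Th y).
Proof. induction n; simpl; auto. intros H. apply T01_ext. lra. auto. Qed.

Lemma iter_C n x : inC x -> inC (Nat.iter n Th x).
Proof. induction n; simpl; auto. intros H. apply T01_C. lra. auto. Qed.

Lemma iter_nonexp n x y : inC x -> inC y ->
  dist (Nat.iter n Th x) (Nat.iter n Th y) <= dist x y.
Proof.
  induction n; simpl; intros. lra. eapply Rle_trans. apply T01_nonexp. lra.
  apply iter_C; auto. apply iter_C; auto. auto.
Qed.

Lemma INR_Ztonat z : (0 <= z)%Z -> INR (Z.to_nat z) = IZR z.
Proof. intros. rewrite INR_IZR_INZ, Z2Nat.id; auto. Qed.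

Lemma Int_part_nonneg y : 0 <= y -> (0 <= Int_part y)%Z.
Proof.
  intros. destruct (base_Int_part y).
  destruct (Z_lt_le_dec (Int_part y) 0) as [l|l]; auto. exfalso.
  assert (K: (Int_part y <= -1)%Z) by lia. apply IZR_le in K. lra.
Qed.

Lemma mT_spec t : 0 <= t -> INR (mT t) <= 2 * t < INR (mT t) + 1.
Proof.
  intros Ht. unfold mT. rewrite INR_Ztonat by (apply Int_part_nonneg; lra).
  destruct (base_Int_part (2 * t)). lra.
Qed.

Lemma Int_part_eq y z : IZR z <= y < IZR z + 1 -> Int_part y = z.
Proof.
  intros H. unfold Int_part. assert (z + 1 = up y)%Z.
  { apply tech_up; rewrite plus_IZR; lra. }
  lia.
Qed.

Lemma mT_eq n r : 0 <= r < 1/2 -> mT (INR n / 2 + r) = n.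
Proof.
  intros Hr. unfold mT. rewrite (Int_part_eq _ (Z.of_nat n)). apply Nat2Z.id.
  rewrite <- INR_IZR_INZ. lra.
Qed.

Lemma T_S t x : 0 <= t -> inC x ->
  eqOn (T t x) (Sg (mT t) (t - INR (mT t) / 2) x).
Proof.
  intros Ht Hx. unfold T. destruct Rle_dec as [H1|H1]; [|apply eqOn_refl].
  pose proof (mT_spec t Ht) as Hm. destruct (mT t) as [|[|[|m]]].
  - unfold Sg; simpl. replace (t - 0/2) with t by lra. apply eqOn_refl.
  - unfold Sg; simpl. simpl in Hm.
    replace t with (1/2 + (t - 1/2)) at 1 by ring. apply L1; auto; lra.
  - unfold Sg; simpl. replace (INR 2) with 2 in Hm by (simpl; lra).
    replace (t - (1 + 1) / 2) with 0 by lra. assert (t = 1) by lra. subst.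
    eapply eqOn_trans. 2:{ apply T01_ext. lra. apply T01_ext. lra. apply eqOn_sym, T01_0. }
    replace 1 with (1/2 + 1/2) at 1 by lra. apply L1; auto; lra.
  - exfalso. rewrite !S_INR in Hm. pose proof (pos_INR m). lra.
Qed.

Lemma Sg_succ n x : eqOn (Sg (S n) 0 x) (Sg n (1/2) x).
Proof.
  unfold Sg. rewrite Nat.iter_succ_r. apply iter_ext. apply T01_ext. lra. apply T01_0.
Qed.

Lemma Sg_T n r x : 0 <= r <= 1/2 -> inC x -> eqOn (Sg n r x) (T (INR n / 2 + r) x).
Proof.
  intros Hr Hx. assert (Ht: 0 <= INR n / 2 + r) by (pose proof (pos_INR n); lra).
  eapply eqOn_trans. 2: apply eqOn_sym, T_S; auto.
  destruct (Rlt_le_dec r (1/2)).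
  - rewrite mT_eq by lra. replace (INR n / 2 + r - INR n / 2) with r by ring. apply eqOn_refl.
  - assert (r = 1/2) by lra. subst.
    replace (INR n / 2 + 1/2) with (INR (S n) / 2 + 0) by (rewrite S_INR; lra).
    rewrite mT_eq by lra. replace (INR (S n) / 2 + 0 - INR (S n) / 2) with 0 by ring.
    apply eqOn_sym, Sg_succ.
Qed.

Lemma commute m r y : 0 <= r <= 1/2 -> inC y ->
  eqOn (T01 r (Nat.iter m Th y)) (Nat.iter m Th (T01 r y)).
Proof.
  intros Hr Hy. induction m; simpl. apply eqOn_refl.
  unfold Th at 1. eapply eqOn_trans. apply eqOn_sym, L1; try lra. apply iter_C; auto.
  replace (r + 1/2) with (1/2 + r) by ring.
  eapply eqOn_trans. apply L1; try lra. apply iter_C; auto.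
  apply T01_ext. lra. auto.
Qed.

Lemma T_C t x : 0 <= t -> inC x -> inC (T t x).
Proof.
  intros Ht Hx. unfold T. destruct Rle_dec. apply T01_C; auto; lra.
  apply iter_C. pose proof (mT_spec t Ht). apply T01_C; auto; lra.
Qed.

Lemma T_nonexp t x y : 0 <= t -> inC x -> inC y -> dist (T t x) (T t y) <= dist x y.
Proof.
  intros Ht Hx Hy. unfold T. destruct Rle_dec. apply T01_nonexp; auto; lra.
  pose proof (mT_spec t Ht).
  eapply Rle_trans. apply iter_nonexp; apply T01_C; auto; lra.
  apply T01_nonexp; auto; lra.
Qed.

Lemma T_ext t x y : 0 <= t -> eqOn x y -> eqOn (T t x) (T t y).
Proof.
  intros Ht H. unfold T. destruct Rle_dec. apply T01_ext; auto; lra.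
  apply iter_ext. pose proof (mT_spec t Ht). apply T01_ext; auto; lra.
Qed.

Lemma semigroup s t x : 0 <= s -> 0 <= t -> inC x -> eqOn (T (s + t) x) (T s (T t x)).
Proof.
  intros Hs Ht Hx.
  pose proof (mT_spec s Hs) as Ms. pose proof (mT_spec t Ht) as Mt.
  set (n := mT s) in *. set (r := s - INR n / 2).
  set (m := mT t) in *. set (q := t - INR m / 2).
  apply eqOn_sym.
  eapply eqOn_trans. apply T_S; auto. apply T_C; auto. fold n r.
  eapply eqOn_trans. unfold Sg. apply iter_ext, T01_ext. unfold r; lra. apply T_S; auto. fold m q.
  unfold Sg. eapply eqOn_trans. apply iter_ext, commute. unfold r; lra. apply T01_C; auto. unfold q; lra.
  rewrite <- Nat.iter_add.
  eapply eqOn_trans. apply iter_ext, eqOn_sym, L1; auto; unfold r, q in *; lra.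
  destruct (Rle_lt_dec (r + q) (1/2)).
  - change (eqOn (Sg (n + m) (r + q) x) (T (s + t) x)).
    eapply eqOn_trans. apply Sg_T; auto. unfold r, q in *; lra.
    rewrite plus_INR. replace ((INR n + INR m) / 2 + (r + q)) with (s + t) by (unfold r, q in *; lra).
    apply eqOn_refl.
  - eapply eqOn_trans. apply iter_ext.
    replace (r + q) with (1/2 + (r + q - 1/2)) by ring. apply L1; auto; unfold r, q in *; lra.
    fold Th. rewrite <- Nat.iter_succ_r.
    change (eqOn (Sg (S (n + m)) (r + q - 1/2) x) (T (s + t) x)).
    eapply eqOn_trans. apply Sg_T; auto. unfold r, q in *; lra.
    rewrite S_INR, plus_INR. replace ((INR n + INR m + 1) / 2 + (r + q - 1/2)) with (s + t) by (unfold r, q in *; lra).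
    apply eqOn_refl.
Qed.

Definition g s u := Rmax 0 (Rmin (s - u) (2 - s + u)).
Definition Gs s : R -> R := fun u => if Req_EM_T u (-1) then 0 else g s u.

Lemma Gs_pos s u : 0 <= u -> Gs s u = g s u.
Proof. intros. unfold Gs. destruct Req_EM_T; [lra|reflexivity]. Qed.
Lemma Gs_m1 s : Gs s (-1) = 0.
Proof. unfold Gs. destruct Req_EM_T; [reflexivity|congruence]. Qed.

Lemma alpha_G s v : 0 <= v -> alpha (Gs s) v = Rmin 1 (Rmax 0 (s - v)).
Proof.
  intros Hv. apply alpha_eq.
  - intros w [Hw|Hw]. subst; rewrite Gs_m1; mm. rewrite Gs_pos by lra. unfold g; mm.
  - destruct (Rle_lt_dec v (s - 1)).
    + exists (s - 1). split. right; lra. rewrite Gs_pos by lra. unfold g; mm.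
    + exists v. split. right; lra. rewrite Gs_pos by lra. unfold g; mm.
Qed.

Lemma T01_G t s : 0 <= t <= 1 -> 0 <= s -> eqOn (T01 t (Gs s)) (Gs (s + t)).
Proof.
  intros Ht Hs u [Hu|Hu].
  - subst. rewrite T01_m1, !Gs_m1. reflexivity.
  - destruct (Rle_lt_dec t u).
    + rewrite T01_ge by lra. rewrite !Gs_pos by lra. unfold g.
      replace (s - (u - t)) with (s + t - u) by ring. replace (2 - s + (u - t)) with (2 - (s + t) + u) by ring.
      reflexivity.
    + rewrite T01_lt by lra. rewrite alpha_G by lra. rewrite !Gs_pos by lra.
      unfold clamp, g. mm.
Qed.

Lemma zero_G : eqOn zeroE (Gs 0).
Proof.
  intros u [Hu|Hu]. subst; rewrite Gs_m1; reflexivity. rewrite Gs_pos by lra. unfold zeroE, g; mm.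
Qed.

Lemma iter_G n a : 0 <= a -> eqOn (Nat.iter n Th (Gs a)) (Gs (a + INR n / 2)).
Proof.
  intros Ha. induction n; simpl.
  - replace (a + 0 / 2) with a by lra. apply eqOn_refl.
  - eapply eqOn_trans. apply T01_ext. lra. apply IHn. 
    eapply eqOn_trans. apply T01_G. lra. pose proof (pos_INR n); lra.
    replace (a + INR n / 2 + 1/2) with (a + INR (S n) / 2) by (rewrite S_INR; lra). apply eqOn_refl.
Qed.

Lemma TG s : 0 <= s -> eqOn (T s zeroE) (Gs s).
Proof.
  intros Hs. eapply eqOn_trans. apply T_ext. auto. apply zero_G.
  unfold T. destruct Rle_dec.
  - eapply eqOn_trans. apply T01_G; lra. replace (0 + s) with s by ring. apply eqOn_refl.
  - pose proof (mT_spec s Hs).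
    eapply eqOn_trans. apply iter_ext. apply T01_G; lra.
    eapply eqOn_trans. apply iter_G. lra. 
    replace (0 + (s - INR (mT s) / 2) + INR (mT s) / 2) with s by ring. apply eqOn_refl.
Qed.

Lemma Gs_lip_s s s' u : Rabs (Gs s u - Gs s' u) <= Rabs (s - s').
Proof.
  unfold Gs. destruct Req_EM_T. rewrite Rminus_diag, Rabs_R0. apply Rabs_pos.
  apply Rabs_le. pose proof (Rle_abs (s - s')). pose proof (Rle_abs (- (s - s'))).
  rewrite Rabs_Ropp in H0. unfold g; mm.
Qed.

Lemma g_lip_u s u u' : Rabs (g s u - g s u') <= Rabs (u - u').
Proof.
  apply Rabs_le. pose proof (Rle_abs (u - u')). pose proof (Rle_abs (- (u - u'))).
  rewrite Rabs_Ropp in H0. unfold g; mm.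
Qed.

Lemma Gs_01 s u : 0 <= Gs s u <= 1.
Proof. unfold Gs. destruct Req_EM_T. lra. unfold g; mm. Qed.

Lemma lip_cont (f : R -> R) : (forall a b, Rabs (f a - f b) <= Rabs (a - b)) ->
  forall z, continuous f z.
Proof.
  intros H z. apply continuity_pt_filterlim. intros eps Heps. exists eps. split; auto.
  intros y [_ Hy]. simpl in *. unfold R_dist in *. eapply Rle_lt_trans. apply H. auto.
Qed.

Lemma exG u a b : ex_RInt (fun s => Gs s u) a b.
Proof. apply (@ex_RInt_continuous R_CompleteNormedModule). intros. apply lip_cont. intros. apply Gs_lip_s. Qed.

Lemma riemann_piece (f : R -> R) a b xi d : a <= xi <= b -> b - a <= d ->
  (forall s s', Rabs (f s - f s') <= Rabs (s - s')) -> ex_RInt f a b ->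
  Rabs (RInt f a b - f xi * (b - a)) <= d * (b - a).
Proof.
  intros Hxi Hd Hf Hex.
  assert (E: RInt (fun s => f s - f xi) a b = RInt f a b - f xi * (b - a)).
  { rewrite (RInt_minus f (fun _ => f xi)); auto. rewrite RInt_const.
    change (RInt f a b - (b - a) * f xi = RInt f a b - f xi * (b - a)). ring.
    apply ex_RInt_const. }
  rewrite <- E. rewrite Rmult_comm. apply abs_RInt_le_const. lra.
  apply (ex_RInt_minus f (fun _ => f xi)); auto. apply ex_RInt_const.
  intros s Hs. eapply Rle_trans. apply Hf. apply Rabs_le; lra.
Qed.

Lemma riemann_err (f : R -> R) k p xi d :
  (forall s s', Rabs (f s - f s') <= Rabs (s - s')) ->
  (forall a b, ex_RInt f a b) ->
  (forall i, (i <= k)%nat -> p i <= xi i <= p (S i)) ->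
  (forall i, (i <= k)%nat -> p (S i) - p i < d) ->
  Rabs (RInt f (p 0%nat) (p (S k)) - sum_n (fun i => f (xi i) * (p (S i) - p i)) k)
    <= d * (p (S k) - p 0%nat).
Proof.
  intros Hf Hex Hxi Hd. induction k.
  - rewrite sum_O. apply riemann_piece; [apply Hxi; lia | left; apply Hd; lia | auto | auto].
  - rewrite sum_Sn. rewrite <- (RInt_Chasles f (p 0%nat) (p (S k)) (p (S (S k)))) by auto.
    change (plus ?a ?b) with (a + b).
    assert (IH: Rabs (RInt f (p 0%nat) (p (S k)) - sum_n (fun i => f (xi i) * (p (S i) - p i)) k)
       <= d * (p (S k) - p 0%nat)).
    { apply IHk; intros; [apply Hxi|apply Hd]; lia. }
    assert (P: Rabs (RInt f (p (S k)) (p (S (S k))) - f (xi (S k)) * (p (S (S k)) - p (S k)))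
       <= d * (p (S (S k)) - p (S k))).
    { apply riemann_piece; [apply Hxi; lia | left; apply Hd; lia | auto | auto]. }
    eapply Rle_trans. 2: apply Req_le; symmetry; apply (f_equal (fun z => z)).
    2: reflexivity.
    replace (d * (p (S (S k)) - p 0%nat)) with (d * (p (S k) - p 0%nat) + d * (p (S (S k)) - p (S k))) by ring.
    eapply Rle_trans. 2: apply Rplus_le_compat; [exact IH|exact P].
    eapply Rle_trans. 2: apply Rabs_triang. apply Req_le. f_equal. ring.
Qed.

Lemma inE_intro x M L : 0 < L -> (forall u, Omega u -> Rabs (x u) <= M) ->
  (forall u1 u2, 0 <= u1 -> 0 <= u2 -> Rabs (x u1 - x u2) <= L * Rabs (u1 - u2)) -> inE x.
Proof.
  intros HL HM HLip. split. exists M; auto.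
  intros u Hu eps Heps. destruct Hu as [Hu|Hu].
  - exists 1. split. lra. intros v [Hv|Hv] Hd.
    + subst. rewrite Rminus_diag, Rabs_R0; auto.
    + subst. rewrite Rabs_pos_eq in Hd; lra.
  - exists (Rmin (eps / L) 1). split. apply Rmin_glb_lt. apply Rdiv_lt_0_compat; lra. lra.
    intros v [Hv|Hv] Hd.
    + subst. rewrite Rabs_left in Hd. pose proof (Rmin_r (eps / L) 1). lra. lra.
    + eapply Rle_lt_trans. apply HLip; auto. pose proof (Rmin_l (eps / L) 1).
      apply Rlt_le_trans with (L * (eps / L)). apply Rmult_lt_compat_l; lra.
      right; field; lra.
Qed.

Definition Iint t u := RInt (fun s => Gs s u) 0 t.

Lemma RInt_le0 (f : R -> R) a b : a <= b -> ex_RInt f a b ->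
  (forall s, a <= s <= b -> f s = 0) -> Rabs (RInt f a b) <= 0.
Proof.
  intros Hab Hex H. eapply Rle_trans. apply (abs_RInt_le_const f a b 0); auto.
  intros. rewrite H; auto. rewrite Rabs_R0; lra. right; ring.
Qed.

Lemma RInt_le1 (f : R -> R) a b : a <= b -> ex_RInt f a b ->
  (forall s, a <= s <= b -> 0 <= f s <= 1) -> Rabs (RInt f a b) <= b - a.
Proof.
  intros Hab Hex H. eapply Rle_trans. apply (abs_RInt_le_const f a b 1); auto.
  intros. specialize (H t H0). rewrite Rabs_pos_eq; lra. right; ring.
Qed.

Lemma Iint_bound2 t u : 0 <= t -> Omega u -> Rabs (Iint t u) <= 2.
Proof.
  intros Ht [Hu|Hu]; unfold Iint.
  - subst. eapply Rle_trans. apply RInt_le0; auto. apply exG. intros; apply Gs_m1. lra.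
  - assert (Z1: forall a b, a <= b -> b <= u -> Rabs (RInt (fun s => Gs s u) a b) <= 0).
    { intros a b Hab Hb. apply RInt_le0; auto. apply exG. intros s Hs. rewrite Gs_pos by lra. unfold g; mm. }
    assert (Z2: forall a b, a <= b -> u + 2 <= a -> Rabs (RInt (fun s => Gs s u) a b) <= 0).
    { intros a b Hab Hb. apply RInt_le0; auto. apply exG. intros s Hs. rewrite Gs_pos by lra. unfold g; mm. }
    assert (O: forall a b, a <= b -> Rabs (RInt (fun s => Gs s u) a b) <= b - a).
    { intros a b Hab. apply RInt_le1; auto. apply exG. intros; apply Gs_01. }
    destruct (Rle_lt_dec t u).
    + specialize (Z1 0 t Ht r). lra.
    + rewrite <- (RInt_Chasles _ 0 u t) by apply exG. change (plus ?a ?b) with (a + b).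
      eapply Rle_trans. apply Rabs_triang.
      specialize (Z1 0 u Hu (Rle_refl _)).
      destruct (Rle_lt_dec t (u + 2)).
      * specialize (O u t ltac:(lra)). lra.
      * rewrite <- (RInt_Chasles _ u (u + 2) t) by apply exG. change (plus ?a ?b) with (a + b).
        specialize (O u (u + 2) ltac:(lra)). specialize (Z2 (u + 2) t ltac:(lra) ltac:(lra)).
        pose proof (Rabs_triang (RInt (fun s : R => Gs s u) u (u + 2)) (RInt (fun s : R => Gs s u) (u + 2) t)).
        lra.
Qed.

Lemma Iint_inE t : 0 < t -> inE (Iint t).
Proof.
  intros Ht. apply (inE_intro _ 2 t Ht). intros; apply Iint_bound2; auto; lra.
  intros u1 u2 H1 H2. unfold Iint.
  assert (E: RInt (fun s => Gs s u1 - Gs s u2) 0 t = RInt (fun s => Gs s u1) 0 t - RInt (fun s => Gs s u2) 0 t).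
  { apply (RInt_minus (fun s => Gs s u1) (fun s => Gs s u2)); apply exG. }
  rewrite <- E. replace (t * Rabs (u1 - u2)) with ((t - 0) * Rabs (u1 - u2)) by ring.
  apply abs_RInt_le_const. lra. apply (ex_RInt_minus (fun s => Gs s u1) (fun s => Gs s u2)); apply exG.
  intros s _. rewrite !Gs_pos by lra. apply g_lip_u.
Qed.

Lemma part_nonneg k (p xi : nat -> R) : p 0%nat = 0 ->
  (forall i, (i <= k)%nat -> p i <= xi i <= p (S i)) -> forall i, (i <= k)%nat -> 0 <= xi i.
Proof.
  intros H0 H i Hi. assert (forall j, (j <= i)%nat -> 0 <= p j).
  { induction j. intros; lra. intros Hj. specialize (H j ltac:(lia)). specialize (IHj ltac:(lia)). lra. }
  specialize (H i Hi). specialize (H1 i (le_n _)). lra.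
Qed.

Lemma integral_part t : 0 < t -> is_E_integral (fun s => T s zeroE) 0 t (Iint t).
Proof.
  intros Ht. split. apply Iint_inE; auto.
  intros eps Heps. exists (eps / t). split. apply Rdiv_lt_0_compat; lra.
  intros k p xi H0 Hk Hxi Hd. apply dist_le. intros u Hu.
  unfold riemann_sum.
  rewrite (sum_n_ext_loc _ (fun i => Gs (xi i) u * (p (S i) - p i))).
  2:{ intros i Hi. rewrite TG; auto. eapply part_nonneg; eauto. }
  unfold Iint. rewrite <- H0, <- Hk.
  eapply Rle_trans. apply (riemann_err (fun s => Gs s u)); auto.
  intros; apply Gs_lip_s. intros; apply exG.
  rewrite H0, Hk. right. field. lra.
Qed.

Lemma lim_part : is_lim (fun t => supn (fun u => / t * Iint t u - zeroE u)) p_infty 0.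
Proof.
  assert (L: is_lim (fun t => 2 * / t) p_infty 0).
  { pose proof (is_lim_scal_l _ 2 _ _ (is_lim_inv _ _ _ (is_lim_id p_infty) ltac:(discriminate))).
    simpl in H. rewrite Rmult_0_r in H. exact H. }
  apply (is_lim_le_le_loc (fun _ => 0) (fun t => 2 * / t)); [|apply is_lim_const|exact L].
  exists 0. intros t Ht.
  assert (B: forall u, Omega u -> Rabs (/ t * Iint t u - zeroE u) <= 2 * / t).
  { intros u Hu. unfold zeroE. rewrite Rminus_0_r, Rabs_mult, Rabs_inv, (Rabs_pos_eq t) by lra.
    pose proof (Iint_bound2 t u ltac:(lra) Hu). pose proof (Rinv_0_lt_compat t Ht).
    rewrite Rmult_comm. apply Rmult_le_compat_r; lra. }
  split. eapply Rle_trans. apply Rabs_pos. apply supn_ub. exists (2 * / t). exact B. left; reflexivity.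
  apply supn_le. exact B.
Qed.

Lemma le_eps a b : (forall eps, 0 < eps -> a <= b + eps) -> a <= b.
Proof.
  intros H. destruct (Rle_lt_dec a b); auto. specialize (H ((a - b) / 2) ltac:(lra)). lra.
Qed.

Lemma closedC : closed_in_E inC.
Proof.
  intros xs x Hxs HxE Hlim.
  assert (A: forall eps, 0 < eps -> exists n, forall u, Omega u -> Rabs (xs n u - x u) < eps).
  { intros eps Heps. apply is_lim_seq_spec in Hlim. destruct (Hlim (mkposreal eps Heps)) as [N HN].
    exists N. intros u Hu. specialize (HN N (le_n _)). simpl in HN. rewrite Rminus_0_r in HN.
    eapply Rle_lt_trans. apply dist_ub; auto. apply inC_bnd; auto. destruct HxE; auto.
    eapply Rle_lt_trans. apply Rle_abs. auto. }
  split; [auto|split].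
  - intros u Hu. split.
    + apply Rge_le, Rminus_ge. apply Rle_ge. apply le_eps. intros eps Heps. destruct (A eps Heps) as [n Hn].
      specialize (Hn u Hu). apply Rabs_lt_between in Hn. pose proof (inC_01 _ u (Hxs n) Hu). lra.
    + apply le_eps. intros eps Heps. destruct (A eps Heps) as [n Hn].
      specialize (Hn u Hu). apply Rabs_lt_between in Hn. pose proof (inC_01 _ u (Hxs n) Hu). lra.
  - intros u1 u2 H1 H2. apply le_eps. intros eps Heps. destruct (A (eps / 2) ltac:(lra)) as [n Hn].
    pose proof (Hn u1 ltac:(right; lra)). pose proof (Hn u2 ltac:(right; lra)).
    pose proof (inC_Lip _ (Hxs n) u1 u2 H1 H2).
    apply Rabs_lt_between in H, H0. apply Rabs_le_between in H3.
    apply Rabs_le. pose proof (Rle_abs (u1 - u2)). lra.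
Qed.

Lemma convexC : convex_set inC.
Proof.
  intros x y lam Hx Hy Hl. apply inC_intro.
  - intros u Hu. pose proof (inC_01 x u Hx Hu). pose proof (inC_01 y u Hy Hu). nra.
  - intros u1 u2 H1 H2. pose proof (inC_Lip x Hx u1 u2 H1 H2). pose proof (inC_Lip y Hy u1 u2 H1 H2).
    replace (lam * x u1 + (1 - lam) * y u1 - (lam * x u2 + (1 - lam) * y u2)) with
      (lam * (x u1 - x u2) + (1 - lam) * (y u1 - y u2)) by ring.
    eapply Rle_trans. apply Rabs_triang. rewrite !Rabs_mult, (Rabs_pos_eq lam), (Rabs_pos_eq (1 - lam)) by lra.
    nra.
Qed.

Lemma zeroC : inC zeroE.
Proof.
  apply inC_intro. intros; unfold zeroE; lra.
  intros u1 u2 _ _. unfold zeroE. replace (0 - 0) with 0 by ring. rewrite Rabs_R0. apply Rabs_pos.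
Qed.

Lemma alpha_zero v : alpha zeroE v = 0.
Proof.
  apply alpha_eq. intros; unfold zeroE; lra. exists (-1). split. left; reflexivity. reflexivity.
Qed.

Lemma not_fixed : ~ common_fixed_point inC T zeroE.
Proof.
  intros [_ H]. specialize (H (1/2) ltac:(lra) 0 ltac:(right; lra)).
  unfold T in H. destruct Rle_dec; [|lra]. rewrite T01_lt in H by lra.
  rewrite alpha_zero in H. unfold zeroE, clamp in H. revert H. mm.
Qed.

Lemma semigroup_all : nonexpansive_semigroup inC T.
Proof.
  split; [|split; [|split; [|split]]].
  - intros; apply T_C; auto.
  - intros; apply T_nonexp; auto.
  - intros x Hx. unfold T. destruct Rle_dec; [|lra]. apply T01_0.
  - intros. apply semigroup; auto.
  - intros x Hx t0 Ht0 eps Heps. exists (Rmin eps 1). split. mm.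
    intros t Ht Hd. pose proof (Rmin_l eps 1). pose proof (Rmin_r eps 1).
    assert (Th1: forall h, 0 <= h <= 1 -> dist (T h x) x <= h).
    { intros h Hh. unfold T. destruct Rle_dec; [|lra]. apply T01_close; auto. }
    destruct (Rle_lt_dec t0 t).
    + rewrite Rabs_pos_eq in Hd by lra.
      rewrite (dist_ext (T t x) (T t0 (T (t - t0) x)) (T t0 x) (T t0 x)).
      2:{ replace t with (t0 + (t - t0)) at 1 by ring. apply semigroup; auto; lra. }
      2: apply eqOn_refl.
      eapply Rle_lt_trans. apply T_nonexp; auto. apply T_C; auto; lra.
      eapply Rle_lt_trans. apply Th1; lra. lra.
    + rewrite Rabs_left in Hd by lra. rewrite dist_sym.
      rewrite (dist_ext (T t0 x) (T t (T (t0 - t) x)) (T t x) (T t x)).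
      2:{ replace t0 with (t + (t0 - t)) at 1 by ring. apply semigroup; auto; lra. }
      2: apply eqOn_refl.
      eapply Rle_lt_trans. apply T_nonexp; auto. apply T_C; auto; lra.
      eapply Rle_lt_trans. apply Th1; lra. lra.
Qed.

Theorem mainTheorem1 :
  closed_in_E inC /\ convex_set inC /\
  nonexpansive_semigroup inC T /\
  inC zeroE /\ ~ common_fixed_point inC T zeroE /\
  exists I : R -> R -> R,
    (forall t, 0 < t -> is_E_integral (fun s => T s zeroE) 0 t (I t)) /\
    is_lim (fun t => supn (fun u => / t * I t u - zeroE u)) p_infty 0.
Proof.
  split. exact closedC. split. exact convexC. split. exact semigroup_all.
  split. exact zeroC. split. exact not_fixed.
  exists Iint. split. exact integral_part. exact lim_part.
Qed.
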